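(* A sequence $X\in2^\omega$ is computable if and only if there exists a left-c.e. semi-measure $\rho$ such that $X$ is an atom of $\overline\rho$, i.e., $\lim_n\overline\rho(X{\upharpoonright}n)>0$.
   Context: $2^{<\omega}$ is the set of finite binary strings, $\varepsilon$ the empty string, $X{\upharpoonright}n$ the first $n$ bits of $X$. A semi-measure is $\rho:2^{<\omega}\to[0,1]$ with $\rho(\varepsilon)=1$ and $\rho(\sigma)\ge\rho(\sigma0)+\rho(\sigma1)$; left-c.e. means its values are uniformly approximable from below by computable non-decreasing rational sequences. $\overline\rho(\sigma)=\inf_{n\ge|\sigma|}\sum_{\tau\succeq\sigma,\,|\tau|=n}\rho(\tau)$, which defines a measure on $2^\omega$; $X$ is an atom of $\overline\rho$ if $\overline\rho(\{X\})>0$. *)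

(* Defs.v *)
From Stdlib Require Import Reals List Arith.
From Coquelicot Require Import Coquelicot.
Import ListNotations.
Open Scope R_scope.

Inductive rec : Type :=
  | RZero : rec
  | RSucc : rec
  | RProj : nat -> rec
  | RComp : rec -> list rec -> rec
  | RPrim : rec -> rec -> rec
  | RMu   : rec -> rec.

Inductive eval : rec -> list nat -> nat -> Prop :=
  | ev_zero : forall v, eval RZero v 0
  | ev_succ : forall x v, eval RSucc (x :: v) (S x)
  | ev_proj : forall i v, (i < length v)%nat -> eval (RProj i) v (nth i v 0%nat)
  | ev_comp : forall f gs v ws y,
      evals gs v ws -> eval f ws y -> eval (RComp f gs) v y
  | ev_prim0 : forall f g v y, eval f v y -> eval (RPrim f g) (0%nat :: v) y
  | ev_primS : forall f g n v r y,
      eval (RPrim f g) (n :: v) r -> eval g (n :: r :: v) y ->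
      eval (RPrim f g) (S n :: v) y
  | ev_mu : forall f v y,
      eval f (y :: v) 0%nat ->
      (forall z, (z < y)%nat -> exists k, eval f (z :: v) (S k)) ->
      eval (RMu f) v y
with evals : list rec -> list nat -> list nat -> Prop :=
  | evs_nil : forall v, evals [] v []
  | evs_cons : forall g gs v w ws,
      eval g v w -> evals gs v ws -> evals (g :: gs) v (w :: ws).

Definition computable1 (f : nat -> nat) : Prop :=
  exists c : rec, forall x, eval c [x] (f x).
Definition computable2 (f : nat -> nat -> nat) : Prop :=
  exists c : rec, forall x y, eval c [x; y] (f x y).

(** Bijective coding of finite binary strings by natural numbers. *)
Fixpoint code (s : list bool) : nat :=
  match s with
  | [] => 0%nat
  | b :: s' => (2 * code s' + (if b then 2 else 1))%nat
  end.

Definition computable_seq (X : nat -> bool) : Prop :=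
  computable1 (fun n => if X n then 1%nat else 0%nat).

Definition prefix (X : nat -> bool) (n : nat) : list bool := map X (seq 0 n).

Definition semimeasure (rho : list bool -> R) : Prop :=
  rho [] = 1 /\
  (forall s, 0 <= rho s <= 1) /\
  (forall s, rho s >= rho (s ++ [false]) + rho (s ++ [true])).

(** The s-th approximation to rho(sigma) is the rational
    (P(c,s) - M(c,s)) / (D(c,s)+1), c = code sigma, with P, M, D computable. *)
Definition approx (P M D : nat -> nat -> nat) (s : list bool) (t : nat) : R :=
  (INR (P (code s) t) - INR (M (code s) t)) / INR (S (D (code s) t)).

Definition left_ce (rho : list bool -> R) : Prop :=
  exists P M D : nat -> nat -> nat,
    computable2 P /\ computable2 M /\ computable2 D /\
    forall s, (forall t, approx P M D s t <= approx P M D s (S t)) /\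
              is_lim_seq (approx P M D s) (rho s).

(** [ext_sum rho s k] = sum of rho(tau) over all tau extending s with |tau| = |s|+k. *)
Fixpoint ext_sum (rho : list bool -> R) (s : list bool) (k : nat) : R :=
  match k with
  | O => rho s
  | S k' => ext_sum rho (s ++ [false]) k' + ext_sum rho (s ++ [true]) k'
  end.

Definition rhobar (rho : list bool -> R) (s : list bool) : R :=
  real (Inf_seq (fun k => Finite (ext_sum rho s k))).

Definition atom (rho : list bool -> R) (X : nat -> bool) : Prop :=
  exists l : R, 0 < l /\ is_lim_seq (fun n => rhobar rho (prefix X n)) l.

(* Main.v *)
Require Import Defs.
From Stdlib Require Import Reals List Lia Lra Arith Classical.
From Coquelicot Require Import Coquelicot.
Import ListNotations.

Open Scope R_scope.

Definition comp_n (n : nat) (c : rec) (f : list nat -> nat) : Prop :=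
  forall v, (n <= length v)%nat -> eval c v (f v).

Lemma comp_ext n c f g : comp_n n c f ->
  (forall v, (n <= length v)%nat -> f v = g v) -> comp_n n c g.
Proof. intros H E v Hv. rewrite <- E by exact Hv. apply H, Hv. Qed.

Lemma comp_zero n : comp_n n RZero (fun _ => 0%nat).
Proof. intros v _. constructor. Qed.

Lemma comp_proj n i : (i < n)%nat -> comp_n n (RProj i) (fun v => nth i v 0%nat).
Proof. intros H v Hv. constructor. lia. Qed.

Lemma comp_RSucc : comp_n 1 RSucc (fun v => S (nth 0 v 0%nat)).
Proof. intros [|x v] Hv; simpl in *; [lia|]. constructor. Qed.

Lemma comp_c1 n f F g G : comp_n 1 f F -> comp_n n g G ->
  comp_n n (RComp f [g]) (fun v => F [G v]).
Proof. intros HF HG v Hv. econstructor. repeat constructor; auto. apply HF; simpl; lia. Qed.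

Lemma comp_c2 n f F g1 G1 g2 G2 : comp_n 2 f F -> comp_n n g1 G1 -> comp_n n g2 G2 ->
  comp_n n (RComp f [g1; g2]) (fun v => F [G1 v; G2 v]).
Proof. intros HF H1 H2 v Hv. econstructor. repeat constructor; auto. apply HF; simpl; lia. Qed.

Lemma comp_c3 n f F g1 G1 g2 G2 g3 G3 : comp_n 3 f F -> comp_n n g1 G1 -> comp_n n g2 G2 ->
  comp_n n g3 G3 ->
  comp_n n (RComp f [g1; g2; g3]) (fun v => F [G1 v; G2 v; G3 v]).
Proof. intros HF H1 H2 H3 v Hv. econstructor. repeat constructor; auto. apply HF; simpl; lia. Qed.

Fixpoint primf (F G : list nat -> nat) (m : nat) (w : list nat) : nat :=
  match m with 0 => F w | S m' => G (m' :: primf F G m' w :: w) end.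

Lemma comp_prim n f F g G : comp_n n f F -> comp_n (S (S n)) g G ->
  comp_n (S n) (RPrim f g) (fun v => primf F G (hd 0%nat v) (tl v)).
Proof.
  intros HF HG [|x w] Hv; simpl in *; [lia|].
  induction x; simpl.
  - constructor. apply HF. lia.
  - econstructor. exact IHx. apply HG. simpl. lia.
Qed.

Lemma least_zero (P : nat -> nat) : (exists y, P y = 0%nat) ->
  exists y, P y = 0%nat /\ forall z, (z < y)%nat -> P z <> 0%nat.
Proof.
  intros [y Hy]. induction y as [y IH] using (well_founded_induction lt_wf).
  destruct (classic (exists z, (z < y)%nat /\ P z = 0%nat)) as [[z [Hz1 Hz2]]|Hn].
  - apply (IH z Hz1 Hz2).
  - exists y. split; auto. intros z Hz E. apply Hn. eauto.
Qed.

Lemma mu_ok n f F v : comp_n (S n) f F -> (n <= length v)%nat ->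
  (exists y, F (y :: v) = 0%nat) ->
  exists y, eval (RMu f) v y /\ F (y :: v) = 0%nat /\
            forall z, (z < y)%nat -> F (z :: v) <> 0%nat.
Proof.
  intros HF Hv Hex. destruct (least_zero (fun y => F (y :: v)) Hex) as [y [Hy Hz]].
  exists y. split; [|auto]. constructor.
  - rewrite <- Hy. apply HF. simpl; lia.
  - intros z Hzy. destruct (F (z :: v)) eqn:E. exfalso; eapply Hz; eauto.
    exists n0. rewrite <- E. apply HF. simpl; lia.
Qed.

Lemma comp_mu n f F m : comp_n (S n) f F ->
  (forall v, (n <= length v)%nat -> F (m v :: v) = 0%nat /\
      forall z, (z < m v)%nat -> F (z :: v) <> 0%nat) -> comp_n n (RMu f) m.
Proof.
  intros HF Hm v Hv. destruct (Hm v Hv) as [H1 H2]. constructor.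
  - rewrite <- H1. apply HF. simpl; lia.
  - intros z Hz. destruct (F (z :: v)) eqn:E. exfalso; eapply H2; eauto.
    exists n0. rewrite <- E. apply HF. simpl; lia.
Qed.

Fixpoint cconst (k : nat) : rec :=
  match k with 0 => RZero | S k => RComp RSucc [cconst k] end.
Lemma comp_const n k : comp_n n (cconst k) (fun _ => k).
Proof.
  induction k; simpl. apply comp_zero.
  eapply comp_ext. apply comp_c1. apply comp_RSucc. apply IHk. reflexivity.
Qed.

Open Scope nat_scope.

Ltac progl := fail.
Ltac prog1 := lazymatch goal with
  | |- comp_n _ (cconst _) _ => apply comp_const
  | |- comp_n _ RZero _ => apply comp_zero
  | |- comp_n _ RSucc _ => apply comp_RSucc
  | |- comp_n _ (RProj _) _ => apply comp_proj; simpl; lia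
  | |- comp_n _ (RComp _ [_; _; _]) _ => apply comp_c3
  | |- comp_n _ (RComp _ [_; _]) _ => apply comp_c2
  | |- comp_n _ (RComp _ [_]) _ => apply comp_c1
  end.
Ltac prog := repeat first [ progl | prog1 ].

Definition cadd := RPrim (RProj 0) (RComp RSucc [RProj 1]).
Lemma cadd_ok : comp_n 2 cadd (fun v => nth 0 v 0 + nth 1 v 0)%nat.
Proof.
  eapply comp_ext. apply comp_prim; prog.
  intros [|x w] Hv; simpl in *; [lia|]. induction x; simpl; auto.
Qed.
Ltac progl ::= apply cadd_ok.

Definition cmul := RPrim RZero (RComp cadd [RProj 1; RProj 2]).
Lemma cmul_ok : comp_n 2 cmul (fun v => nth 0 v 0 * nth 1 v 0)%nat.
Proof.
  eapply comp_ext. apply comp_prim; prog.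
  intros [|x w] Hv; simpl in *; [lia|]. induction x; simpl; auto. rewrite IHx. lia.
Qed.
Ltac progl ::= first [apply cadd_ok | apply cmul_ok].

Definition cpred := RPrim RZero (RProj 0).
Lemma cpred_ok : comp_n 1 cpred (fun v => pred (nth 0 v 0))%nat.
Proof.
  eapply comp_ext. apply comp_prim; prog.
  intros [|x w] Hv; simpl in *; [lia|]. destruct x; simpl; auto.
Qed.
Ltac progl ::= first [apply cadd_ok | apply cmul_ok | apply cpred_ok].

Definition csubr := RPrim (RProj 0) (RComp cpred [RProj 1]).
Lemma csubr_ok : comp_n 2 csubr (fun v => nth 1 v 0 - nth 0 v 0)%nat.
Proof.
  eapply comp_ext. apply comp_prim; prog.
  intros [|x w] Hv; simpl in *; [lia|]. induction x; simpl. lia. rewrite IHx. lia.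
Qed.
Definition csub := RComp csubr [RProj 1; RProj 0].
Lemma csub_ok : comp_n 2 csub (fun v => nth 0 v 0 - nth 1 v 0)%nat.
Proof.
  eapply comp_ext. unfold csub. apply comp_c2; [apply csubr_ok|prog|prog].
  intros v Hv; simpl. reflexivity.
Qed.
Ltac progl ::= first [apply cadd_ok | apply cmul_ok | apply cpred_ok | apply csub_ok].

Definition cpow2 := RPrim (cconst 1) (RComp cadd [RProj 1; RProj 1]).
Lemma cpow2_ok : comp_n 1 cpow2 (fun v => 2 ^ (nth 0 v 0))%nat.
Proof.
  eapply comp_ext. apply comp_prim; prog.
  intros [|x w] Hv; simpl in *; [lia|]. induction x; simpl. lia. rewrite IHx. lia.
Qed.

Definition chalf := RMu (RComp csub [RComp RSucc [RProj 1];
   RComp RSucc [RComp RSucc [RComp cadd [RProj 0; RProj 0]]]]).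
Lemma chalf_ok : comp_n 1 chalf (fun v => Nat.div2 (nth 0 v 0))%nat.
Proof.
  eapply comp_mu. prog.
  intros [|x w] Hv; simpl in *; [lia|].
  pose proof (Nat.div2_odd x) as Hd. destruct (Nat.odd x); simpl in Hd; split; try lia;
  intros; lia.
Qed.
Ltac progl ::= first [apply cadd_ok | apply cmul_ok | apply cpred_ok | apply csub_ok
  | apply cpow2_ok | apply chalf_ok].

Definition cpar := RComp csub [RProj 0; RComp cadd [chalf; chalf]].
Lemma cpar_ok : comp_n 1 cpar (fun v => nth 0 v 0 - (Nat.div2 (nth 0 v 0) + Nat.div2 (nth 0 v 0)))%nat.
Proof. eapply comp_ext. unfold cpar. prog. intros; reflexivity. Qed.

Definition csg := RComp csub [cconst 1; RComp csub [cconst 1; RProj 0]].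
Lemma csg_ok : comp_n 1 csg (fun v => 1 - (1 - nth 0 v 0))%nat.
Proof. eapply comp_ext. unfold csg. prog. intros; reflexivity. Qed.

Definition cneq1 := RComp cadd [RComp csub [cconst 1; RProj 0]; RComp csub [RProj 0; cconst 1]].
Lemma cneq1_ok : comp_n 1 cneq1 (fun v => (1 - nth 0 v 0) + (nth 0 v 0 - 1))%nat.
Proof. eapply comp_ext. unfold cneq1. prog. intros; reflexivity. Qed.

Definition stepf (x : nat) : nat := Nat.div2 (pred x).
Definition cstep := RComp chalf [RComp cpred [RProj 0]].
Lemma cstep_ok : comp_n 1 cstep (fun v => stepf (nth 0 v 0)).
Proof. eapply comp_ext. unfold cstep. prog. intros; reflexivity. Qed.

Definition cIt := RPrim (RProj 0) (RComp cstep [RProj 1]).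
Lemma cIt_ok : comp_n 2 cIt (fun v => Nat.iter (nth 0 v 0) stepf (nth 1 v 0)).
Proof.
  eapply comp_ext. apply comp_prim; [prog|]. apply comp_c1. apply cstep_ok. prog.
  intros [|x w] Hv; simpl in *; [lia|]. induction x; simpl. auto. rewrite IHx. auto.
Qed.

Open Scope nat_scope.

Definition parf (x : nat) := x - (Nat.div2 x + Nat.div2 x).

Lemma div2_code b s : Nat.div2 (pred (code (b :: s))) = code s.
Proof.
  change (code (b :: s)) with (2 * code s + (if b then 2 else 1)).
  generalize (code s); intro c. destruct b.
  - replace (pred (2 * c + 2)) with (S (2 * c)) by lia.
    apply Nat.div2_succ_double.
  - replace (pred (2 * c + 1)) with (2 * c) by lia. apply Nat.div2_double.
Qed.

Lemma stepf_code s : stepf (code s) = code (tl s).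
Proof. destruct s as [|b s]. reflexivity. apply div2_code. Qed.

Lemma skipn_S_tl j (s : list bool) : skipn (S j) s = tl (skipn j s).
Proof. revert s; induction j; intros [|b s]; simpl; auto. apply IHj. Qed.

Lemma iter_code j s : Nat.iter j stepf (code s) = code (skipn j s).
Proof.
  induction j. reflexivity.
  simpl Nat.iter. rewrite IHj, stepf_code, skipn_S_tl. reflexivity.
Qed.

Lemma parf_code b s : parf (code (b :: s)) = if b then 0 else 1.
Proof.
  unfold parf. change (code (b :: s)) with (2 * code s + (if b then 2 else 1)).
  generalize (code s); intro c. destruct b.
  - replace (2 * c + 2) with (2 * (S c)) by lia.
    rewrite Nat.div2_double. lia.
  - replace (2 * c + 1) with (S (2 * c)) by lia.
    rewrite Nat.div2_succ_double. lia.
Qed.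

Lemma code_app s b : code (s ++ [b]) = code s + 2 ^ length s * (if b then 2 else 1).
Proof.
  induction s as [|c s IH]; simpl.
  - destruct b; reflexivity.
  - rewrite IH. destruct b, c; lia.
Qed.

Lemma length_code s : length s <= code s.
Proof. induction s as [|b s IH]; simpl; [lia|]. destruct b; lia. Qed.

Lemma skipn_nth j (s : list bool) : j < length s -> skipn j s = nth j s false :: skipn (S j) s.
Proof.
  revert s; induction j; intros [|b s] H; simpl in *; try lia. reflexivity. apply IHj. lia.
Qed.

Lemma skipn_len j (s : list bool) : length s <= j -> skipn j s = [].
Proof. intros; apply skipn_all2; auto. Qed.

Open Scope nat_scope.

Definition xb (X : nat -> bool) (n : nat) : nat := if X n then 1 else 0.

Definition cXw (cX : rec) := RComp cX [RProj 0].
Lemma cXw_ok X cX : (forall x, eval cX [x] (xb X x)) ->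
  comp_n 1 (cXw cX) (fun v => xb X (nth 0 v 0)).
Proof.
  intros HX v Hv. econstructor. constructor. constructor. lia. constructor. apply HX.
Qed.

Definition mismf X j d := (1 - (1 - d)) * ((1 - (parf d + xb X j)) + ((parf d + xb X j) - 1)).
Definition cmism cX := RComp cmul [RComp csg [RProj 1]; RComp cneq1
   [RComp cadd [RComp cpar [RProj 1]; RComp (cXw cX) [RProj 0]]]].

Ltac progl ::= first [apply cadd_ok | apply cmul_ok | apply cpred_ok | apply csub_ok
  | apply cpow2_ok | apply chalf_ok | apply cpar_ok | apply csg_ok | apply cneq1_ok
  | apply cstep_ok | apply cIt_ok | (eapply cXw_ok; eassumption)].

Lemma cmism_ok X cX : (forall x, eval cX [x] (xb X x)) ->
  comp_n 2 (cmism cX) (fun v => mismf X (nth 0 v 0) (nth 1 v 0)).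
Proof.
  intro HX. eapply comp_ext. unfold cmism.
  prog. intros v Hv. reflexivity.
Qed.

Ltac progl ::= first [apply cadd_ok | apply cmul_ok | apply cpred_ok | apply csub_ok
  | apply cpow2_ok | apply chalf_ok | apply cpar_ok | apply csg_ok | apply cneq1_ok
  | apply cstep_ok | apply cIt_ok | (eapply cXw_ok; eassumption) | (eapply cmism_ok; eassumption)].

Fixpoint Sumf X i c := match i with 0 => 0 | S i => Sumf X i c + mismf X i (Nat.iter i stepf c) end.
Definition cSum cX := RPrim RZero (RComp cadd [RProj 1; RComp (cmism cX) [RProj 0; RComp cIt [RProj 0; RProj 2]]]).
Lemma cSum_ok X cX : (forall x, eval cX [x] (xb X x)) ->
  comp_n 2 (cSum cX) (fun v => Sumf X (nth 0 v 0) (nth 1 v 0)).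
Proof.
  intro HX. eapply comp_ext. apply comp_prim; prog.
  intros [|x w] Hv; simpl in *; [lia|]. destruct w as [|c w]; simpl in *; [lia|].
  induction x; simpl; auto; rewrite IHx; reflexivity.
Qed.

Definition Pf X c := 1 - Sumf X c c.
Definition cPf cX := RComp csub [cconst 1; RComp (cSum cX) [RProj 0; RProj 0]].
Lemma cPf_ok X cX : (forall x, eval cX [x] (xb X x)) ->
  comp_n 2 (cPf cX) (fun v => Pf X (nth 0 v 0)).
Proof.
  intro HX. eapply comp_ext. unfold cPf. apply comp_c2; [prog | prog | apply comp_c2; [apply cSum_ok; auto| prog | prog]].
  intros; reflexivity.
Qed.

Lemma Sumf_zero X i c : Sumf X i c = 0 <-> forall j, j < i -> mismf X j (Nat.iter j stepf c) = 0.
Proof.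
  induction i; simpl. split; intros; auto; lia.
  split.
  - intros H j Hj. assert (j < i \/ j = i) as [Hj2|Hj2] by lia; [|subst j].
    apply IHi; auto; lia. lia.
  - intros H. assert (Sumf X i c = 0) by (apply IHi; auto). rewrite H0, H; auto.
Qed.

Lemma code_cons_pos b s : 1 <= code (b :: s).
Proof. simpl; destruct b; lia. Qed.

Lemma mism_code X j s : mismf X j (code (skipn j s)) = 0 <-> (j < length s -> nth j s false = X j).
Proof.
  destruct (Nat.lt_ge_cases j (length s)) as [H|H].
  - rewrite (skipn_nth j s H). unfold mismf. rewrite parf_code.
    pose proof (code_cons_pos (nth j s false) (skipn (S j) s)) as Hp.
    revert Hp. generalize (code (nth j s false :: skipn (S j) s)). intros d Hd.
    assert (Hs : 1 - (1 - d) = 1) by lia. rewrite Hs. unfold xb. split.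
    + intros E _. destruct (nth j s false), (X j); auto; exfalso; simpl in E; lia.
    + intros E. rewrite E by auto. destruct (X j); simpl; lia.
  - rewrite (skipn_len j s H). simpl. split; intros; auto; lia.
Qed.

Lemma nth_prefix X n j : j < n -> nth j (prefix X n) false = X j.
Proof.
  intros H. unfold prefix. rewrite nth_indep with (d' := X 0) by (rewrite length_map, length_seq; auto).
  rewrite map_nth, seq_nth; auto.
Qed.

Lemma length_prefix X n : length (prefix X n) = n.
Proof. unfold prefix. rewrite length_map, length_seq. auto. Qed.

Lemma is_prefix_iff X s : s = prefix X (length s) <-> forall j, j < length s -> nth j s false = X j.
Proof.
  split.
  - intros E j Hj. rewrite E. apply nth_prefix; auto.
  - intros H. apply nth_ext with (d := false) (d' := false). rewrite length_prefix; auto.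
    intros j Hj. rewrite nth_prefix; auto.
Qed.

Lemma Pf_code X s : Pf X (code s) = if list_eq_dec Bool.bool_dec s (prefix X (length s)) then 1 else 0.
Proof.
  unfold Pf. destruct (list_eq_dec Bool.bool_dec s (prefix X (length s))) as [E|E].
  - assert (Sumf X (code s) (code s) = 0) as ->; auto.
    apply Sumf_zero. intros j Hj. rewrite iter_code. apply mism_code.
    apply is_prefix_iff; auto.
  - assert (Sumf X (code s) (code s) <> 0); [|lia].
    intros Z. apply E. apply is_prefix_iff. intros j Hj.
    rewrite Sumf_zero in Z. apply (mism_code X j s); auto.
    rewrite <- iter_code. apply Z. pose proof (length_code s); lia.
Qed.

Lemma prefix_S X n : prefix X (S n) = prefix X n ++ [X n].
Proof. unfold prefix. rewrite seq_S, map_app. reflexivity. Qed.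

Open Scope R_scope.

Lemma pref_app X s b : s ++ [b] = prefix X (length (s ++ [b])) ->
  s = prefix X (length s) /\ b = X (length s).
Proof.
  intro H. rewrite length_app in H. simpl in H.
  rewrite Nat.add_1_r, prefix_S in H. apply app_inj_tail in H. exact H.
Qed.

Definition rhoF X (s : list bool) : R := INR (Pf X (code s)).

Lemma rhoF_eq X s : rhoF X s = if list_eq_dec Bool.bool_dec s (prefix X (length s)) then 1 else 0.
Proof. unfold rhoF. rewrite Pf_code. destruct list_eq_dec; reflexivity. Qed.

Lemma rhoF_semi X : semimeasure (rhoF X).
Proof.
  split; [|split].
  - rewrite rhoF_eq. destruct list_eq_dec as [|n]; auto. exfalso; apply n; reflexivity.
  - intros s. rewrite rhoF_eq. destruct list_eq_dec; lra.
  - intros s. rewrite !rhoF_eq.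
    destruct (list_eq_dec Bool.bool_dec (s ++ [false]) _) as [E1|E1];
    destruct (list_eq_dec Bool.bool_dec (s ++ [true]) _) as [E2|E2];
    destruct (list_eq_dec Bool.bool_dec s _) as [E3|E3]; try lra;
    try (apply pref_app in E1); try (apply pref_app in E2); exfalso; intuition congruence.
Qed.

Lemma es_zero X s k : s <> prefix X (length s) -> ext_sum (rhoF X) s k = 0.
Proof.
  revert s; induction k; intros s H; simpl.
  - rewrite rhoF_eq. destruct list_eq_dec; tauto || lra.
  - rewrite !IHk. lra. all: intro E; apply pref_app in E; tauto.
Qed.

Lemma es_one X n k : ext_sum (rhoF X) (prefix X n) k = 1.
Proof.
  revert n; induction k; intros n; simpl.
  - rewrite rhoF_eq, length_prefix. destruct list_eq_dec; tauto || lra.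
  - destruct (X n) eqn:Hx.
    + rewrite (es_zero X (prefix X n ++ [false])).
      replace (prefix X n ++ [true]) with (prefix X (S n)). rewrite IHk. lra.
      rewrite prefix_S, Hx; auto.
      intro E. apply pref_app in E. rewrite length_prefix in E. destruct E; congruence.
    + rewrite (es_zero X (prefix X n ++ [true])).
      replace (prefix X n ++ [false]) with (prefix X (S n)). rewrite IHk. lra.
      rewrite prefix_S, Hx; auto.
      intro E. apply pref_app in E. rewrite length_prefix in E. destruct E; congruence.
Qed.

Lemma forward X : computable_seq X -> exists rho, semimeasure rho /\ left_ce rho /\ atom rho X.
Proof.
  intros [cX HX]. exists (rhoF X). split; [apply rhoF_semi|split].
  - exists (fun c t => Pf X c), (fun _ _ => 0%nat), (fun _ _ => 0%nat).
    split; [|split; [|split]].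
    + exists (cPf cX). intros x y. apply (cPf_ok X cX HX [x; y]). simpl; lia.
    + exists RZero. intros; constructor.
    + exists RZero. intros; constructor.
    + intros s. unfold approx. simpl INR. split. intros; lra.
      eapply is_lim_seq_ext; [|apply is_lim_seq_const]. intros t. unfold rhoF. simpl. field.
  - exists 1. split; [lra|]. eapply is_lim_seq_ext; [|apply is_lim_seq_const].
    intros n. unfold rhobar.
    rewrite (is_inf_seq_unique _ (Finite 1)). reflexivity.
    intros eps. split.
    + intros k. rewrite es_one. simpl. destruct eps; simpl; lra.
    + exists 0%nat. rewrite es_one. simpl. destruct eps; simpl; lra.
Qed.

Open Scope R_scope.

Lemma es_nonneg rho s k : semimeasure rho -> 0 <= ext_sum rho s k.
Proof.
  intros [_ [H _]]. revert s; induction k; intros s; simpl.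
  - apply H.
  - pose proof (IHk (s ++ [false])); pose proof (IHk (s ++ [true])); lra.
Qed.

Lemma es_decr rho s k : semimeasure rho -> ext_sum rho s (S k) <= ext_sum rho s k.
Proof.
  intros Hs. destruct Hs as [H0 [H1 H2]]. revert s; induction k; intros s.
  - simpl. specialize (H2 s). lra.
  - change (ext_sum rho s (S (S k))) with
      (ext_sum rho (s ++ [false]) (S k) + ext_sum rho (s ++ [true]) (S k)).
    change (ext_sum rho s (S k)) with
      (ext_sum rho (s ++ [false]) k + ext_sum rho (s ++ [true]) k).
    pose proof (IHk (s ++ [false])); pose proof (IHk (s ++ [true])); lra.
Qed.

Lemma es_mono rho s k m : semimeasure rho -> (k <= m)%nat -> ext_sum rho s m <= ext_sum rho s k.
Proof.
  intros Hs H. induction H. lra. pose proof (es_decr rho s m Hs). lra.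
Qed.

Lemma inf_char (u : nat -> R) : (forall n, 0 <= u n) ->
  exists x, Inf_seq (fun n => Finite (u n)) = Finite x /\ 0 <= x /\
    (forall n, x <= u n) /\ (forall eps, 0 < eps -> exists n, u n < x + eps).
Proof.
  intros Hu. pose proof (Inf_seq_correct (fun n => Finite (u n))) as H.
  destruct (Inf_seq (fun n => Finite (u n))) as [x| |] eqn:E; simpl in H.
  - exists x. split; auto.
    assert (Hle : forall n, x <= u n).
    { intros n. destruct (Rle_lt_dec x (u n)) as [h|h]; auto. exfalso.
      assert (0 < x - u n) as hp by lra. destruct (H (mkposreal _ hp)) as [H1 _].
      specialize (H1 n). simpl in H1. lra. }
    split; [|split; auto].
    + destruct (Rle_lt_dec 0 x) as [h|h]; auto. exfalso.
      assert (0 < - x) as hp by lra. destruct (H (mkposreal _ hp)) as [_ [n H2]].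
      simpl in H2. specialize (Hu n). lra.
    + intros eps Heps. destruct (H (mkposreal _ Heps)) as [_ [n H2]]. exists n. exact H2.
  - exfalso. specialize (H (u 0%nat) 0%nat). simpl in H. lra.
  - exfalso. destruct (H 0) as [n Hn]. simpl in Hn. specialize (Hu n). lra.
Qed.

Lemma rhobar_char rho s : semimeasure rho ->
  0 <= rhobar rho s /\ (forall k, rhobar rho s <= ext_sum rho s k) /\
  (forall eps, 0 < eps -> exists k, ext_sum rho s k < rhobar rho s + eps).
Proof.
  intros Hs. destruct (inf_char (fun k => ext_sum rho s k)) as [x [E [H1 [H2 H3]]]].
  intros; apply es_nonneg; auto.
  unfold rhobar. rewrite E. simpl. auto.
Qed.

Lemma rhobar_le_rho rho s : semimeasure rho -> rhobar rho s <= rho s.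
Proof. intros Hs. destruct (rhobar_char rho s Hs) as [_ [H _]]. apply (H 0%nat). Qed.

Lemma rhobar_mono rho s b : semimeasure rho -> rhobar rho (s ++ [b]) <= rhobar rho s.
Proof.
  intros Hs. destruct (rhobar_char rho s Hs) as [_ [_ H3]].
  destruct (rhobar_char rho (s ++ [b]) Hs) as [_ [H2' _]].
  assert (forall k, rhobar rho (s ++ [b]) <= ext_sum rho s k).
  { intros [|k].
    - simpl. pose proof (rhobar_le_rho rho (s ++ [b]) Hs).
      destruct Hs as [_ [Hr Hsup]]. specialize (Hsup s).
      pose proof (Hr (s ++ [false])); pose proof (Hr (s ++ [true])). destruct b; lra.
    - simpl. pose proof (H2' k).
      pose proof (es_nonneg rho (s ++ [false]) k Hs).
      pose proof (es_nonneg rho (s ++ [true]) k Hs). destruct b; lra. }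
  destruct (Rle_lt_dec (rhobar rho (s ++ [b])) (rhobar rho s)) as [h|h]; auto.
  exfalso. destruct (H3 (rhobar rho (s ++ [b]) - rhobar rho s)) as [k Hk]. lra.
  specialize (H k). lra.
Qed.

Lemma es_along rho X n i j : semimeasure rho ->
  ext_sum rho (prefix X (n + i)) j <= ext_sum rho (prefix X n) (i + j).
Proof.
  intros Hs. revert n; induction i; intros n.
  - rewrite Nat.add_0_r. simpl. lra.
  - simpl (S i + j)%nat. simpl ext_sum.
    replace (n + S i)%nat with (S n + i)%nat by lia.
    pose proof (IHi (S n)) as IH. rewrite prefix_S in IH.
    pose proof (es_nonneg rho (prefix X n ++ [false]) (i + j) Hs).
    pose proof (es_nonneg rho (prefix X n ++ [true]) (i + j) Hs).
    destruct (X n); lra.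
Qed.

Open Scope R_scope.

Lemma lim_ge_of_decr (u : nat -> R) (l : R) : (forall n, u (S n) <= u n) -> is_lim_seq u l ->
  forall n, l <= u n.
Proof.
  intros Hd Hl n.
  assert (Hm : forall m, u (m + n)%nat <= u n).
  { induction m. simpl; lra. simpl. specialize (Hd (m + n)%nat). lra. }
  rewrite (is_lim_seq_incr_n u n) in Hl.
  pose proof (is_lim_seq_le _ _ _ _ Hm Hl (is_lim_seq_const (u n))). simpl in H. exact H.
Qed.

Lemma key rho X : semimeasure rho -> atom rho X -> exists N0 b, (0 < b)%nat /\
  (forall N, (N0 <= N)%nat -> rho (prefix X N ++ [negb (X N)]) < / INR b) /\
  (forall N, / INR b < rho (prefix X N)).
Proof.
  intros Hs [l [Hl0 Hlim]].
  set (u := fun n => rhobar rho (prefix X n)) in *.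
  assert (Hd : forall n, u (S n) <= u n).
  { intros n. unfold u. rewrite prefix_S. apply rhobar_mono; auto. }
  pose proof (lim_ge_of_decr u l Hd Hlim) as Hge.
  destruct (archimed_cor1 l Hl0) as [b [Hb Hb0]].
  set (r := / INR b) in *.
  assert (Hr : 0 < r). { unfold r. apply Rinv_0_lt_compat. apply lt_0_INR; auto. }
  apply is_lim_seq_spec in Hlim. destruct (Hlim (mkposreal r Hr)) as [n0 Hn0].
  specialize (Hn0 n0 (le_n _)). simpl in Hn0.
  assert (Hun : u n0 < l + r). { apply Rabs_def2 in Hn0. lra. }
  destruct (rhobar_char rho (prefix X n0) Hs) as [_ [_ H3]].
  destruct (H3 (l + r - u n0)) as [k Hk]. lra.
  fold (u n0) in Hk.
  exists (n0 + k)%nat, b. split; auto. split.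
  - intros N HN.
    pose proof (es_along rho X n0 (N - n0) 1 Hs) as HA.
    replace (n0 + (N - n0))%nat with N in HA by lia.
    pose proof (es_mono rho (prefix X n0) k (N - n0 + 1) Hs ltac:(lia)) as HM.
    simpl in HA.
    pose proof (rhobar_le_rho rho (prefix X (S N)) Hs) as HR.
    pose proof (Hge (S N)) as HG. unfold u in HG. rewrite prefix_S in HR, HG.
    unfold r in *; destruct (X N); simpl in *; lra.
  - intros N. pose proof (rhobar_le_rho rho (prefix X N) Hs). pose proof (Hge N).
    unfold u, r in *. lra.
Qed.

Open Scope R_scope.

Lemma wrap2_ok c (f : nat -> nat -> nat) : (forall x y, eval c [x; y] (f x y)) ->
  comp_n 2 (RComp c [RProj 0; RProj 1]) (fun v => f (nth 0 v 0%nat) (nth 1 v 0%nat)).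
Proof.
  intros H v Hv. econstructor. repeat constructor; lia. apply H.
Qed.

Lemma div_cmp (b d : nat) (y : R) : (0 < b)%nat ->
  (/ INR b < y / INR (S d) <-> INR (S d) < y * INR b).
Proof.
  intros Hb. assert (0 < INR b) by (apply lt_0_INR; auto).
  assert (0 < INR (S d)) by (apply lt_0_INR; lia).
  split; intros H1.
  - apply (Rmult_lt_compat_r (INR b * INR (S d))) in H1; [|nra].
    replace (/ INR b * (INR b * INR (S d))) with (INR (S d)) in H1 by (field; lra).
    replace (y / INR (S d) * (INR b * INR (S d))) with (y * INR b) in H1 by (field; lra).
    exact H1.
  - apply (Rmult_lt_compat_r (/ (INR b * INR (S d)))) in H1;
      [|apply Rinv_0_lt_compat; nra].
    replace (INR (S d) * / (INR b * INR (S d))) with (/ INR b) in H1 by (field; lra).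
    replace (y * INR b * / (INR b * INR (S d))) with (y / INR (S d)) in H1 by (field; lra).
    exact H1.
Qed.

Definition Testf (P M D : nat -> nat -> nat) (b : nat) (c t : nat) : nat :=
  1 - (1 - (P c t * b - (S (D c t) + M c t * b))).

Lemma Testf_spec P M D b s t : (0 < b)%nat ->
  (Testf P M D b (code s) t = 1%nat <-> / INR b < approx P M D s t) /\
  (Testf P M D b (code s) t = 0%nat <-> ~ (/ INR b < approx P M D s t)).
Proof.
  intros Hb. unfold approx. rewrite div_cmp by auto.
  set (p := P (code s) t). set (m := M (code s) t). set (d := D (code s) t).
  assert (E : INR (S d) < (INR p - INR m) * INR b <-> (S d + m * b < p * b)%nat).
  { split; intro H.
    - apply INR_lt. rewrite plus_INR, !mult_INR. lra.
    - apply lt_INR in H. rewrite plus_INR, !mult_INR in H. lra. }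
  rewrite E. unfold Testf. fold p m d. split; split; intro H; lia.
Qed.

Open Scope nat_scope.

Ltac progl ::= first [apply cadd_ok | apply cmul_ok | apply cpred_ok | apply csub_ok
  | apply cpow2_ok | apply chalf_ok | apply cpar_ok | apply csg_ok | apply cneq1_ok
  | apply cstep_ok | apply cIt_ok | (apply wrap2_ok; eassumption)].

Definition w2 c := RComp c [RProj 0; RProj 1].

Definition cTest cP cM cD b := RComp csg [RComp csub
  [RComp cmul [w2 cP; cconst b];
   RComp cadd [RComp RSucc [w2 cD]; RComp cmul [w2 cM; cconst b]]]].

Lemma cTest_ok P M D cP cM cD b :
  (forall x y, eval cP [x; y] (P x y)) -> (forall x y, eval cM [x; y] (M x y)) ->
  (forall x y, eval cD [x; y] (D x y)) ->
  comp_n 2 (cTest cP cM cD b) (fun v => Testf P M D b (nth 0 v 0) (nth 1 v 0)).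
Proof.
  intros HP HM HD. eapply comp_ext. unfold cTest, w2. prog. intros; reflexivity.
Qed.

Ltac progl ::= first [apply cadd_ok | apply cmul_ok | apply cpred_ok | apply csub_ok
  | apply cpow2_ok | apply chalf_ok | apply cpar_ok | apply csg_ok | apply cneq1_ok
  | apply cstep_ok | apply cIt_ok | (apply wrap2_ok; eassumption)
  | (eapply cTest_ok; eassumption)].

Definition cpw N0 i := RComp cpow2 [RComp cadd [cconst N0; RProj i]].

(* arity 3 : t, N, g *)
Definition cFm cP cM cD b N0 :=
  RComp csub [cconst 1; RComp cadd
    [RComp (cTest cP cM cD b) [RComp cadd [RProj 2; cpw N0 1]; RProj 0];
     RComp (cTest cP cM cD b) [RComp cadd [RComp cadd [RProj 2; cpw N0 1]; cpw N0 1]; RProj 0]]].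

Definition Ff P M D b N0 t N g :=
  1 - (Testf P M D b (g + 2 ^ (N0 + N)) t + Testf P M D b (g + 2 ^ (N0 + N) + 2 ^ (N0 + N)) t).

Lemma cFm_ok P M D cP cM cD b N0 :
  (forall x y, eval cP [x; y] (P x y)) -> (forall x y, eval cM [x; y] (M x y)) ->
  (forall x y, eval cD [x; y] (D x y)) ->
  comp_n 3 (cFm cP cM cD b N0) (fun v => Ff P M D b N0 (nth 0 v 0) (nth 1 v 0) (nth 2 v 0)).
Proof.
  intros HP HM HD. eapply comp_ext. unfold cFm, cpw. prog. intros; reflexivity.
Qed.

Definition cTm cP cM cD b N0 := RMu (cFm cP cM cD b N0).
Definition cBm cP cM cD b N0 := RComp (cTest cP cM cD b)
  [RComp cadd [RComp cadd [RProj 1; cpw N0 0]; cpw N0 0]; cTm cP cM cD b N0].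
Definition cstepG cP cM cD b N0 :=
  RComp cadd [RProj 1; RComp cmul [cpw N0 0; RComp RSucc [cBm cP cM cD b N0]]].
Definition cG cP cM cD b N0 g0 := RPrim (cconst g0) (cstepG cP cM cD b N0).
Definition cXo cP cM cD b N0 g0 :=
  RComp csub [cconst 1; RComp cpar [RComp cIt [RProj 0;
     RComp (cG cP cM cD b N0 g0) [RComp csub [RComp RSucc [RProj 0]; cconst N0]]]]].

Open Scope nat_scope.

Record GP (rho : list bool -> R) (X : nat -> bool) (P M D : nat -> nat -> nat)
   (cP cM cD : rec) (b N0 : nat) : Prop := {
  gHP : forall x y, eval cP [x; y] (P x y);
  gHM : forall x y, eval cM [x; y] (M x y);
  gHD : forall x y, eval cD [x; y] (D x y);
  gApp : forall s, (forall t, (approx P M D s t <= approx P M D s (S t))%R) /\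
                   is_lim_seq (approx P M D s) (rho s);
  gb : (0 < b)%nat;
  gH1 : forall N, (N0 <= N)%nat -> (rho (prefix X N ++ [negb (X N)]) < / INR b)%R;
  gH2 : forall N, (/ INR b < rho (prefix X N))%R }.

Lemma approx_le rho X P M D cP cM cD b N0 (G : GP rho X P M D cP cM cD b N0) s t :
  (approx P M D s t <= rho s)%R.
Proof.
  destruct (gApp _ _ _ _ _ _ _ _ _ _ G s) as [Hi Hl].
  assert (Hm : forall m, (approx P M D s t <= approx P M D s (m + t)%nat)%R).
  { induction m. simpl; lra. simpl. specialize (Hi (m + t)%nat). lra. }
  rewrite (is_lim_seq_incr_n _ t) in Hl.
  pose proof (is_lim_seq_le _ _ _ _ Hm (is_lim_seq_const _) Hl). simpl in H. exact H.
Qed.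

Lemma approx_gt rho X P M D cP cM cD b N0 (G : GP rho X P M D cP cM cD b N0) s :
  (/ INR b < rho s)%R -> exists t, (/ INR b < approx P M D s t)%R.
Proof.
  intros H. destruct (gApp _ _ _ _ _ _ _ _ _ _ G s) as [_ Hl].
  apply is_lim_seq_spec in Hl.
  assert (He : (0 < rho s - / INR b)%R) by lra.
  destruct (Hl (mkposreal _ He)) as [n Hn]. exists n. specialize (Hn n (le_n _)).
  simpl in Hn. apply Rabs_def2 in Hn. lra.
Qed.

Definition Gf X N0 N := code (prefix X (N0 + N)).

Lemma code_false X N0 N : (Gf X N0 N + 2 ^ (N0 + N))%nat = code (prefix X (N0 + N) ++ [false]).
Proof. unfold Gf. rewrite code_app, length_prefix. lia. Qed.
Lemma code_true X N0 N : (Gf X N0 N + 2 ^ (N0 + N) + 2 ^ (N0 + N))%nat = code (prefix X (N0 + N) ++ [true]).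
Proof. unfold Gf. rewrite code_app, length_prefix. lia. Qed.
Lemma Gf_S X N0 N : Gf X N0 (S N) = (Gf X N0 N + 2 ^ (N0 + N) * S (xb X (N0 + N)))%nat.
Proof.
  unfold Gf. rewrite Nat.add_succ_r, prefix_S, code_app, length_prefix. unfold xb.
  destruct (X (N0 + N)); lia.
Qed.

Lemma wrong_zero rho X P M D cP cM cD b N0 (G : GP rho X P M D cP cM cD b N0) N t :
  Testf P M D b (code (prefix X (N0 + N) ++ [negb (X (N0 + N))])) t = 0%nat.
Proof.
  apply (Testf_spec P M D b _ t (gb _ _ _ _ _ _ _ _ _ _ G)).
  pose proof (approx_le _ _ _ _ _ _ _ _ _ _ G (prefix X (N0 + N) ++ [negb (X (N0 + N))]) t).
  pose proof (gH1 _ _ _ _ _ _ _ _ _ _ G (N0 + N)%nat ltac:(lia)). lra.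
Qed.

Lemma right_exists rho X P M D cP cM cD b N0 (G : GP rho X P M D cP cM cD b N0) N :
  exists t, Testf P M D b (code (prefix X (N0 + N) ++ [X (N0 + N)])) t = 1%nat.
Proof.
  pose proof (gH2 _ _ _ _ _ _ _ _ _ _ G (S (N0 + N))) as H. rewrite prefix_S in H.
  destruct (approx_gt _ _ _ _ _ _ _ _ _ _ G _ H) as [t Ht]. exists t.
  apply (Testf_spec P M D b _ t (gb _ _ _ _ _ _ _ _ _ _ G)). exact Ht.
Qed.

Lemma Testf_le1 P M D b c t : (Testf P M D b c t <= 1)%nat.
Proof. unfold Testf. lia. Qed.

Lemma Tm_ok rho X P M D cP cM cD b N0 (G : GP rho X P M D cP cM cD b N0) N w :
  exists t, eval (cTm cP cM cD b N0) (N :: Gf X N0 N :: w) t /\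
    Testf P M D b (code (prefix X (N0 + N) ++ [X (N0 + N)])) t = 1%nat.
Proof.
  pose proof (cFm_ok P M D cP cM cD b N0 (gHP _ _ _ _ _ _ _ _ _ _ G)
     (gHM _ _ _ _ _ _ _ _ _ _ G) (gHD _ _ _ _ _ _ _ _ _ _ G)) as HF.
  destruct (mu_ok 2 _ _ (N :: Gf X N0 N :: w) HF ltac:(simpl; lia)) as [t [Ht [Hz _]]].
  - destruct (right_exists _ _ _ _ _ _ _ _ _ _ G N) as [t Ht]. exists t. simpl.
    unfold Ff. rewrite code_true, code_false. destruct (X (N0 + N)); simpl in Ht; lia.
  - exists t. split; auto. simpl in Hz. unfold Ff in Hz. rewrite code_true, code_false in Hz.
    pose proof (wrong_zero _ _ _ _ _ _ _ _ _ _ G N t) as W.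
    pose proof (Testf_le1 P M D b (code (prefix X (N0 + N) ++ [false])) t).
    pose proof (Testf_le1 P M D b (code (prefix X (N0 + N) ++ [true])) t).
    destruct (X (N0 + N)); simpl in W |- *; lia.
Qed.

Ltac progl ::= first [apply cadd_ok | apply cmul_ok | apply cpred_ok | apply csub_ok
  | apply cpow2_ok | apply chalf_ok | apply cpar_ok | apply csg_ok | apply cneq1_ok
  | apply cstep_ok | apply cIt_ok].

Lemma cpwsum_ok N0 : comp_n 2 (RComp cadd [RComp cadd [RProj 1; cpw N0 0]; cpw N0 0])
  (fun v => nth 1 v 0 + 2 ^ (N0 + nth 0 v 0) + 2 ^ (N0 + nth 0 v 0)).
Proof. eapply comp_ext. unfold cpw. prog. intros; reflexivity. Qed.

Lemma Bm_ok rho X P M D cP cM cD b N0 (G : GP rho X P M D cP cM cD b N0) N w :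
  eval (cBm cP cM cD b N0) (N :: Gf X N0 N :: w) (xb X (N0 + N)).
Proof.
  destruct (Tm_ok _ _ _ _ _ _ _ _ _ _ G N w) as [t [Ht Htest]].
  unfold cBm. econstructor.
  - constructor. apply cpwsum_ok. simpl; lia. constructor. exact Ht. constructor.
  - replace (xb X (N0 + N)) with
      (Testf P M D b (Gf X N0 N + 2 ^ (N0 + N) + 2 ^ (N0 + N)) t).
    + apply (cTest_ok P M D cP cM cD b (gHP _ _ _ _ _ _ _ _ _ _ G)
       (gHM _ _ _ _ _ _ _ _ _ _ G) (gHD _ _ _ _ _ _ _ _ _ _ G)
       [Gf X N0 N + 2 ^ (N0 + N) + 2 ^ (N0 + N); t]). simpl; lia.
    + rewrite code_true. pose proof (wrong_zero _ _ _ _ _ _ _ _ _ _ G N t) as W.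
      unfold xb. destruct (X (N0 + N)); simpl in *; auto.
Qed.

Lemma cpw_ok N0 : comp_n 1 (cpw N0 0) (fun v => 2 ^ (N0 + nth 0 v 0)).
Proof. eapply comp_ext. unfold cpw. prog. intros; reflexivity. Qed.

Lemma step_ok rho X P M D cP cM cD b N0 (G : GP rho X P M D cP cM cD b N0) N w :
  eval (cstepG cP cM cD b N0) (N :: Gf X N0 N :: w) (Gf X N0 (S N)).
Proof.
  rewrite Gf_S. unfold cstepG. econstructor.
  - constructor. constructor. simpl; lia. constructor.
    + econstructor.
      * constructor. apply cpw_ok. simpl; lia. constructor.
        econstructor. constructor. apply (Bm_ok _ _ _ _ _ _ _ _ _ _ G). constructor.
        constructor. constructor.
      * apply (cmul_ok [2 ^ (N0 + N); S (xb X (N0 + N))]). simpl; lia.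
    + constructor.
  - apply (cadd_ok [Gf X N0 N; 2 ^ (N0 + N) * S (xb X (N0 + N))]). simpl; lia.
Qed.

Lemma G_ok rho X P M D cP cM cD b N0 (G : GP rho X P M D cP cM cD b N0) :
  comp_n 1 (cG cP cM cD b N0 (Gf X N0 0)) (fun v => Gf X N0 (nth 0 v 0)).
Proof.
  intros [|N w] Hv; simpl in *; [lia|]. induction N.
  - constructor. apply (comp_const 0 _ w). lia.
  - econstructor. exact IHN. apply (step_ok _ _ _ _ _ _ _ _ _ _ G).
Qed.

Lemma Xo_ok rho X P M D cP cM cD b N0 (G : GP rho X P M D cP cM cD b N0) :
  comp_n 1 (cXo cP cM cD b N0 (Gf X N0 0)) (fun v => xb X (nth 0 v 0)).
Proof.
  eapply comp_ext. unfold cXo. prog. apply (G_ok _ _ _ _ _ _ _ _ _ _ G). prog.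
  intros [|m w] Hv; [simpl in Hv; lia|].
  cbv beta iota delta [nth]. unfold Gf. rewrite iter_code.
  set (L := N0 + (S m - N0)).
  assert (HL : m < length (prefix X L)) by (rewrite length_prefix; unfold L; lia).
  rewrite (skipn_nth m _ HL). fold (parf (code (nth m (prefix X L) false :: skipn (S m) (prefix X L)))).
  rewrite parf_code, nth_prefix by (unfold L; lia). unfold xb. destruct (X m); reflexivity.
Qed.

Open Scope R_scope.

Theorem proposition6p9 (X : nat -> bool) :
  computable_seq X <->
  exists rho : list bool -> R, semimeasure rho /\ left_ce rho /\ atom rho X.
Proof.
  split. apply forward.
  intros [rho [Hs [[P [M [D [[cP HP] [[cM HM] [[cD HD] Happ]]]]]] Ha]]].
  destruct (key rho X Hs Ha) as [N0 [b [Hb [H1 H2]]]].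
  assert (G : GP rho X P M D cP cM cD b N0) by (constructor; auto).
  exists (cXo cP cM cD b N0 (Gf X N0 0)). intros x.
  exact (Xo_ok _ _ _ _ _ _ _ _ _ _ G [x] ltac:(simpl; lia)).
Qed.
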